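(* For integers $r\ge 1$ and $n\ge r+1$, $$\mathfrak{q}_{r-1}({\sf T}_n^r)=rn-r^2+1.$$
   Context: A (finite abstract) simplicial complex is a family of subsets of a finite vertex set closed under taking subsets; an $i$-face is a member of cardinality $i+1$; $S_i(K)$ is the set of $i$-faces. For an $i$-face $F$, $d_K(F)$ is the number of $(i+1)$-faces containing $F$; two distinct $i$-faces are up-neighbors if their union is an $(i+1)$-face. The signless up Laplacian $Q_i^{\mathrm{up}}(K)$ is the operator on $\mathbb{R}^{S_i(K)}$ given by $(Q_i^{\mathrm{up}}(K)f)(F)=d_K(F)f(F)+\sum_{F'\text{ up-neighbor of }F}f(F')$, and $\mathfrak{q}_i(K)$ is its largest eigenvalue. The tented complex ${\sf T}_n^r$ is the pure $r$-dimensional complex on vertex set $[n]$ whose facets are the sets $\{n\}\cup F$ with $F$ an $r$-element subset of $[n-1]$ (together with all their subsets). *)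

(* Defs.v *)
From mathcomp Require Import all_boot all_order all_algebra.
Set Implicit Arguments. Unset Strict Implicit. Unset Printing Implicit Defensive.
Import Order.TTheory GRing.Theory Num.Theory.
Local Open Scope ring_scope.

Definition is_simplicial_complex (T : finType) (K : {set {set T}}) : Prop :=
  forall A B : {set T}, A \in K -> B \subset A -> B \in K.

Definition faces (T : finType) (K : {set {set T}}) (i : nat) : {set {set T}} :=
  [set F in K | #|F| == i.+1].

Definition face_deg (T : finType) (K : {set {set T}}) (i : nat) (F : {set T}) : nat :=
  #|[set G in faces K i.+1 | F \subset G]|.

Definition up_nb (T : finType) (K : {set {set T}}) (i : nat) (F F' : {set T}) : bool :=
  (F != F') && (F :|: F' \in faces K i.+1).

(* The signless up Laplacian Q_i^up(K) acting on functions on S_i(K)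
   (functions are represented on all of {set T}; only values on S_i(K) matter). *)
Definition Qup (R : nzRingType) (T : finType) (K : {set {set T}}) (i : nat)
  (f : {set T} -> R) (F : {set T}) : R :=
  (face_deg K i F)%:R * f F + \sum_(F' in faces K i | up_nb K i F F') f F'.

Definition is_eigenvalue_Qup (R : nzRingType) (T : finType) (K : {set {set T}})
  (i : nat) (lam : R) : Prop :=
  exists f : {set T} -> R,
    (exists2 F, F \in faces K i & f F != 0) /\
    (forall F, F \in faces K i -> Qup K i f F = lam * f F).

Definition is_largest_eigenvalue_Qup (R : realFieldType) (T : finType)
  (K : {set {set T}}) (i : nat) (lam : R) : Prop :=
  is_eigenvalue_Qup K i lam /\
  (forall mu : R, is_eigenvalue_Qup K i mu -> mu <= lam).

(* The tented complex T_n^r on vertex set [n], encoded as 'I_n with vertex k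
   represented by the ordinal of value k-1 (so the apex n is the ordinal n-1):
   all subsets of {n} ∪ F with F an r-element subset of [n-1]. *)
Definition tented (n r : nat) : {set {set 'I_n}} :=
  [set S : {set 'I_n} | [exists F : {set 'I_n},
     [&& #|F| == r, [forall x in F, (val x < n.-1)%N] &
         S \subset F :|: [set x : 'I_n | val x == n.-1]]]].

(* Main.v *)
Require Import Defs.
From mathcomp Require Import all_boot all_order all_algebra.
Import Order.TTheory GRing.Theory Num.Theory.

Set Implicit Arguments. Unset Strict Implicit.
From mathcomp Require Import ring.

Local Open Scope ring_scope.

Lemma facesE (T : finType) (K : {set {set T}}) i F :
  (F \in faces K i) = (F \in K) && (#|F| == i.+1)%N.
Proof. by rewrite /faces inE. Qed.

Lemma count_common (T : finType) (K : {set {set T}}) i F F' :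
  F \in faces K i -> F' \in faces K i -> F' != F ->
  #|[set G in faces K i.+1 | (F \subset G) && (F' \subset G)]| =
  (F :|: F' \in faces K i.+1).
Proof.
move=> Fin F'in neq; move: (Fin) (F'in); rewrite !facesE => /andP [_ /eqP cF] /andP [_ /eqP cF'].
have big : (i.+2 <= #|F :|: F'|)%N.
  case: (subset_leqif_cards (subsetUl F F')) => le1 eqc.
  case E: (F == F :|: F').
    exfalso; move/negP: neq; apply; rewrite eqEcard cF cF' leqnn andbT.
    by rewrite (eqP E) subsetUr.
  by rewrite -cF ltn_neqAle le1 andbT eqc E.
have key : forall G, (G \in faces K i.+1) && (F \subset G) && (F' \subset G) =
    (G == F :|: F') && (F :|: F' \in faces K i.+1).
  move=> G; apply/idP/idP.
    rewrite -andbA => /and3P [GK sFG sF'G].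
    have sU : F :|: F' \subset G by rewrite subUset sFG.
    have eG : F :|: F' == G.
      move: (GK); rewrite facesE => /andP [_ /eqP cG].
      by rewrite eqEcard sU cG.
    by rewrite eq_sym eG /= (eqP eG).
  by case/andP => /eqP -> ->; rewrite subsetUl subsetUr.
case: (boolP (F :|: F' \in faces K i.+1)) => H.
  rewrite (_ : [set G in _ | _] = [set F :|: F']) ?cards1.
    by move: H; rewrite facesE => ->.
  by apply/setP => G; rewrite in_set in_set1 andbA key H andbT.
rewrite (_ : [set G in _ | _] = set0) ?cards0.
  by move: H; rewrite facesE => /negbTE ->.
by apply/setP => G; rewrite in_set in_set0 andbA key (negbTE H) andbF.
Qed.

Lemma Qup_BBt (R : nzRingType) (T : finType) (K : {set {set T}}) (i : nat)
  (f : {set T} -> R) F : F \in faces K i ->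
  Qup K i f F = \sum_(G in faces K i.+1 | F \subset G)
                   \sum_(F' in faces K i | F' \subset G) f F'.
Proof.
move=> Fin.
rewrite (exchange_big_dep (fun F' => F' \in faces K i)) /=; last by move=> ? ? _ /andP [].
have inner : forall F', \sum_(G | (G \in faces K i.+1) && (F \subset G) &&
        ((F' \in faces K i) && (F' \subset G))) f F' =
     ((F' \in faces K i) * #|[set G in faces K i.+1 | (F \subset G) && (F' \subset G)]|)%:R * f F'.
  move=> F'; case: (boolP (F' \in faces K i)) => HF'.
    rewrite mul1n mulr_natl -sumr_const; apply: eq_bigl => G.
    by rewrite in_set /= -!andbA.
  by rewrite mul0n mul0r big1 // => G; by rewrite /= andbF.
under eq_bigr do rewrite inner.
rewrite (bigD1 F) //= Fin mul1n.
rewrite /Qup; congr (_ * _ + _).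
  congr (_%:R); rewrite /face_deg; apply: eq_card => G; rewrite !inE andbb.
  by [].
rewrite [RHS]big_mkcond [LHS]big_mkcond /=; apply: eq_bigr => F' _.
case: (boolP (F' \in faces K i)) => HF' //=.
rewrite mul1n /up_nb.
case: (boolP (F' == F)) => [/eqP ->|neq] /=.
  by rewrite eqxx.
rewrite eq_sym neq /= count_common //.
by case: (F :|: F' \in _); rewrite ?mul1r ?mul0r.
Qed.
Local Close Scope ring_scope.

Lemma one_more (T : finType) (S G : {set T}) :
  S \subset G -> #|G| = #|S|.+1 -> exists2 y, y \notin S & G = y |: S.
Proof.
move=> sSG cG.
have : #|G :\: S| == 1.
  by rewrite cardsD (setIidPr sSG) cG subSnn.
case/cards1P => y Hy.
have yGS : y \in G :\: S by rewrite Hy set11.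
exists y; first by move: yGS; rewrite in_setD => /andP [].
apply/setP => z; rewrite in_setU1.
case: (boolP (z \in S)) => zS; first by rewrite orbT (subsetP sSG).
move/setP: Hy => Hy; rewrite orbF; have := Hy z; rewrite in_setD zS /= in_set1 => ->.
by [].
Qed.

Lemma A_set1 m : [set x : 'I_m.+1 | val x == m] = [set ord_max].
Proof. by apply/setP => x; rewrite !inE. Qed.

Lemma T1 m r (F S : {set 'I_m.+1}) :
  #|F| = r -> ord_max \notin F -> S \subset ord_max |: F -> S \in tented m.+1 r.
Proof.
move=> cF aF sS; rewrite inE; apply/existsP; exists F.
rewrite cF eqxx /= A_set1 setUC sS andbT.
apply/forallP => x; apply/implyP => xF /=.
have xa : x != ord_max by apply: contraNneq aF => <-.
by rewrite ltn_neqAle -ltnS ltn_ord andbT.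
Qed.

Lemma T2 m r (S : {set 'I_m.+1}) : S \in tented m.+1 r ->
  exists F : {set 'I_m.+1}, [/\ #|F| = r, ord_max \notin F & S \subset ord_max |: F].
Proof.
rewrite inE => /existsP [F /and3P [/eqP cF /forallP hF sS]].
exists F; split => //.
  apply/negP => aF; have := implyP (hF ord_max) aF; rewrite /= ltnn //.
by rewrite setUC -A_set1.
Qed.

Lemma tented_closed m r (S G : {set 'I_m.+1}) :
  G \in tented m.+1 r -> S \subset G -> S \in tented m.+1 r.
Proof.
move=> /T2 [F [cF aF sG]] sS; apply: (T1 cF aF); exact: subset_trans sS sG.
Qed.

Lemma faces_r m r (G : {set 'I_m.+1}) :
  (G \in faces (tented m.+1 r) r) = (ord_max \in G) && (#|G| == r.+1).
Proof.
rewrite /faces inE; apply/idP/idP.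
  case/andP => /T2 [F [cF aF sG]] /eqP cG.
  have cU : #|ord_max |: F| = r.+1 by rewrite cardsU1 aF cF.
  have : G == ord_max |: F by rewrite eqEcard sG cU cG leqnn.
  by move/eqP => ->; rewrite setU11 cU eqxx.
case/andP => aG /eqP cG; rewrite cG eqxx andbT.
apply: (@T1 _ _ (G :\ ord_max)); first by move: cG; rewrite (cardsD1 ord_max) aG => -[].
  by rewrite setD11.
by rewrite setD1K.
Qed.

Lemma deg_tented m r (S : {set 'I_m.+1}) : (1 <= r)%N -> #|S| = r ->
  face_deg (tented m.+1 r) r.-1 S = if ord_max \in S then m.+1 - r else 1%N.
Proof.
move=> r1 cS; rewrite /face_deg prednK //.
have E : [set G in faces (tented m.+1 r) r | S \subset G] =
   [set G : {set 'I_m.+1} | (ord_max \in G) && (#|G| == r.+1) && (S \subset G)].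
  by apply/setP => G; rewrite [LHS]in_set [RHS]in_set faces_r.
rewrite E.
case: ifP => aS.
  rewrite (_ : [set G | _] = [set y |: S | y in ~: S]).
    rewrite card_in_imset.
      have := cardsC S; rewrite card_ord cS => H.
      by rewrite -(addKn r #|~: S|) H.
    move=> y z; rewrite !inE => yS zS e.
    have : y \in z |: S by rewrite -e setU11.
    by rewrite in_setU1 (negbTE yS) orbF => /eqP.
  apply/setP => G; rewrite in_set; apply/idP/imsetP.
    case/andP => /andP [aG /eqP cG] sSG.
    have cG1 : #|G| = #|S|.+1 by rewrite cG cS.
    have [y yS ->] := one_more sSG cG1.
    by exists y; rewrite // inE.
  case=> y; rewrite inE => yS ->.
  by rewrite in_setU1 aS orbT cardsU1 yS cS eqxx subsetUr.
rewrite (_ : [set G | _] = [set ord_max |: S]) ?cards1 //.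
apply/setP => G; rewrite in_set in_set1; apply/idP/idP.
  case/andP => /andP [aG /eqP cG] sSG.
  by rewrite eq_sym eqEcard subUset sub1set aG sSG cardsU1 aS cS cG leqnn.
by move/eqP => ->; rewrite setU11 cardsU1 aS cS eqxx subsetUr.
Qed.

Lemma sumdeg m r (G : {set 'I_m.+1}) : (1 <= r)%N ->
  G \in faces (tented m.+1 r) r ->
  (\sum_(F' in faces (tented m.+1 r) r.-1 | F' \subset G)
     face_deg (tented m.+1 r) r.-1 F' = 1 + r * (m.+1 - r))%N.
Proof.
move=> r1 Gf; have Gt : G \in tented m.+1 r by move: Gf; rewrite /faces in_set => /andP [].
move: Gf; rewrite faces_r => /andP [aG /eqP cG].
have cGx : forall x, x \in G -> #|G :\ x| = r.
  by move=> x xG; move: cG; rewrite (cardsD1 x) xG => -[].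
have E : forall F', (F' \in faces (tented m.+1 r) r.-1) && (F' \subset G) =
                   (F' \in [set G :\ x | x in G]).
  move=> F'; rewrite /faces in_set prednK //; apply/idP/imsetP.
    case/andP => /andP [_ /eqP cF] sFG.
    have cG1 : #|G| = #|F'|.+1 by rewrite cG cF.
    have [x xF ->] := one_more sFG cG1.
    by exists x; rewrite ?setU11 ?setU1K.
  case=> x xG ->.
  by rewrite subD1set andbT cGx // eqxx andbT (tented_closed Gt (subD1set G x)).
rewrite (eq_bigl _ _ E) big_imset /=; last first.
  move=> x y xG yG e; apply/eqP; apply: contraT => nxy.
  have : x \in G :\ y by rewrite in_setD1 nxy xG.
  by rewrite -e setD11.
rewrite (bigD1 ord_max) //= deg_tented ?cGx // setD11.
congr (_ + _)%N.
rewrite (eq_bigr (fun _ => m.+1 - r)%N); last first.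
  by move=> x /andP [xG xa]; rewrite deg_tented ?cGx // in_setD1 eq_sym xa aG.
rewrite sum_nat_cond_const; congr (_ * _)%N.
rewrite -(cGx ord_max aG); apply: eq_card => x; rewrite !inE andbC.
by [].
Qed.
Local Open Scope ring_scope.

Lemma perron (R : realFieldType) (T : finType) (K : {set {set T}}) (i : nat)
  (g : {set T} -> R) (lam mu : R) :
  (forall F, F \in faces K i -> 0 < g F) ->
  (forall F, F \in faces K i -> Qup K i g F = lam * g F) ->
  is_eigenvalue_Qup K i mu -> mu <= lam.
Proof.
move=> gpos geig [f [[F0 F0in f0] feig]].
set h := fun F => `|f F| / g F.
case: (@arg_maxP _ _ _ F0 (mem (faces K i)) h F0in) => F Fin Fmax.
set t := h F.
have ht : forall F', F' \in faces K i -> `|f F'| <= t * g F'.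
  move=> Fp Fpin; have := Fmax Fp Fpin; rewrite /t /h /=.
  idtac.
  move=> H; have gp := gpos _ Fpin; have := ler_wpM2r (ltW gp) H.
  by rewrite divfK // gt_eqF.
have gF := gpos F Fin.
have tpos : 0 < t.
  apply: (lt_le_trans _ (Fmax F0 F0in)); rewrite /h divr_gt0 ?gpos //.
  by rewrite normr_gt0.
have fF : `|f F| = t * g F by rewrite /t /h mulrC mulrCA divff ?mulr1 // gt_eqF.
have fFpos : 0 < `|f F| by rewrite fF mulr_gt0.
have key : `|mu| * `|f F| <= lam * `|f F|.
  rewrite -normrM -feig // /Qup.
  apply: (le_trans (ler_normD _ _)).
  rewrite fF mulrCA -geig // /Qup mulrDr.
  apply: lerD.
    by rewrite normrM ger0_norm ?ler0n // mulrCA -fF.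
  apply: (le_trans (ler_norm_sum _ _ _)).
  rewrite mulr_sumr; apply: ler_sum => F' /andP [F'in _].
  by apply: ht.
have : `|mu| <= lam by rewrite -(ler_pM2r fFpos).
by apply: le_trans; apply: ler_norm.
Qed.

Theorem mainTheorem5 (R : realFieldType) (r n : nat) :
  (1 <= r)%N -> (r.+1 <= n)%N ->
  is_largest_eigenvalue_Qup (tented n r) r.-1
    (r%:R * n%:R - r%:R ^+ 2 + 1 : R).
Proof.
move=> r1; case: n => [//|m] rm.
have rm' : (r <= m)%N by [].
have rm1 : (r <= m.+1)%N by apply: leqW.
set K := tented m.+1 r.
have lamE : (r%:R * m.+1%:R - r%:R ^+ 2 + 1 : R) = ((1 + r * (m.+1 - r))%N)%:R.
  rewrite natrD natrM natrB //; ring.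
set lam := (r%:R * m.+1%:R - r%:R ^+ 2 + 1 : R).
pose g := fun F => ((face_deg K r.-1 F)%:R : R).
have gpos : forall F, F \in faces K r.-1 -> 0 < g F.
  move=> F; rewrite /faces in_set prednK // => /andP [_ /eqP cF].
  rewrite /g /K deg_tented // ltr0n; case: ifP => // _.
  by rewrite subn_gt0.
have Kr : r.-1.+1 = r by rewrite prednK.
have geig : forall F, F \in faces K r.-1 -> Qup K r.-1 g F = lam * g F.
  move=> F Fin; rewrite Qup_BBt // Kr.
  transitivity (\sum_(G in faces K r | F \subset G) lam).
    apply: eq_bigr => G /andP [Gf _]; rewrite /g -natr_sum /K sumdeg //.
  rewrite /g /face_deg prednK // mulr_natr -sumr_const.
  by apply: eq_bigl => G; rewrite in_set.
split; last by move=> mu; apply: (perron gpos geig).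
exists g; split; last exact: geig.
pose F0 := [set widen_ord rm1 y | y : 'I_r].
have cF0 : #|F0| = r.
  by rewrite card_imset ?card_ord // => x y /(congr1 val) /= /val_inj.
have aF0 : ord_max \notin F0.
  apply/imsetP => -[y _ /(congr1 val) /= e].
  by move: (ltn_ord y); rewrite -e ltnNge rm'.
have F0in : F0 \in faces K r.-1.
  rewrite /faces in_set prednK // cF0 eqxx andbT.
  by apply: (T1 cF0 aF0); rewrite subsetUr.
by exists F0 => //; rewrite gt_eqF // gpos.
Qed.
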